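(* Let $\mathcal{S}$ be the set of non-uniformly stable matchings in $G$, let $\equiv$ be the relation on $\mathcal{S}$ with $\mu\equiv\sigma$ iff $\mu(v)\sim_v\sigma(v)$ for every $v\in V_1$, let $\mathbb{C}$ be the set of its equivalence classes and $\langle\mu\rangle$ the class of $\mu$. Then the operations $\langle\mu\rangle\wedge_\equiv\langle\sigma\rangle:=\langle\mu\wedge\sigma\rangle$ and $\langle\mu\rangle\vee_\equiv\langle\sigma\rangle:=\langle\mu\vee\sigma\rangle$ are well-defined on $\mathbb{C}$, and $(\mathbb{C},\wedge_\equiv,\vee_\equiv)$ is a distributive lattice (i.e., both operations are idempotent, commutative and associative, satisfy the absorption laws, and each distributes over the other).
   Context: Setting: $G=(V,E)$ is a finite simple bipartite graph with $V=V_1\sqcup V_2$, every edge joining a vertex of $V_1$ to a vertex of $V_2$; an edge is identified with the set of its two endpoints. $E$ is partitioned into $E_1,E_2$. For $F\subseteq E$ and $v\in V$, $F(v)$ is the set of edges of $F$ incident to $v$. For every $v\in V$ there is a transitive and complete binary relation $\succsim_v$ on $E(v)\cup\{\emptyset\}$ with $e\succsim_v\emptyset$ and $\emptyset\not\succsim_v e$ for all $e\in E(v)$; $e\succ_v f$ means $e\succsim_v f$ and $f\not\succsim_v e$; $e\sim_v f$ means both $e\succsim_v f$ and $f\succsim_v e$. A matching is $\mu\subseteq E$ with $|\mu(v)|\le1$ for all $v$; $\mu(v)$ denotes the edge of $\mu$ at $v$, or $\emptyset$. An edge $e\in E\setminus\mu$ weakly blocks $\mu$ if $e\succsim_v\mu(v)$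 for every $v\in e$; it strongly blocks $\mu$ if additionally $e\succ_w\mu(w)$ for some $w\in e$. $\mu$ is non-uniformly stable if no edge of $E_1\setminus\mu$ weakly blocks $\mu$ and no edge of $E_2\setminus\mu$ strongly blocks $\mu$. For non-uniformly stable $\mu,\sigma$, define for each $v\in V_1$: $(\mu\wedge\sigma)(v)=\mu(v)$ if $\mu(v)\succsim_v\sigma(v)$ and $=\sigma(v)$ if $\sigma(v)\succ_v\mu(v)$; $(\mu\vee\sigma)(v)=\mu(v)$ if $\sigma(v)\succsim_v\mu(v)$ and $=\sigma(v)$ if $\mu(v)\succ_v\sigma(v)$; $\mu\wedge\sigma$ and $\mu\vee\sigma$ are the corresponding edge sets $\{(\mu\odot\sigma)(v):v\in V_1\}\setminus\{\emptyset\}$, which are non-uniformly stable matchings. *)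

(* Defs.v *)
From mathcomp Require Import all_boot.
Set Implicit Arguments. Unset Strict Implicit. Unset Printing Implicit Defensive.

Section NUStable.
Variable V : finType.

(* Conventions:
   - V2 is the complement of V1 in V.
   - an edge is a 2-element subset of V; E : {set {set V}}.
   - E2 := E :\: E1.
   - the "empty" option ∅ is None; an edge e is Some e.
   - pref v x y  means  x ≿_v y. *)

Definition edges_at (F : {set {set V}}) (v : V) : {set {set V}} :=
  [set e in F | v \in e].

Definition bipartite_graph (V1 : {set V}) (E : {set {set V}}) : Prop :=
  forall e, e \in E -> exists x y, [/\ x \in V1, y \notin V1 & e = [set x; y]].

Definition pref_dom (E : {set {set V}}) (v : V) (x : option {set V}) : bool :=
  if x is Some e then e \in edges_at E v else true.

Definition valid_prefs (E : {set {set V}}) (pref : V -> rel (option {set V})) : Prop :=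
  forall v,
  [/\ (forall x y z, pref_dom E v x -> pref_dom E v y -> pref_dom E v z ->
         pref v x y -> pref v y z -> pref v x z),
      (forall x y, pref_dom E v x -> pref_dom E v y -> pref v x y || pref v y x)
    & (forall e, e \in edges_at E v -> pref v (Some e) None && ~~ pref v None (Some e))].

Definition valid_instance (V1 : {set V}) (E E1 : {set {set V}})
  (pref : V -> rel (option {set V})) : Prop :=
  [/\ bipartite_graph V1 E, E1 \subset E & valid_prefs E pref].

Definition strict_pref (pref : V -> rel (option {set V})) (v : V) (x y : option {set V}) :=
  pref v x y && ~~ pref v y x.

Definition is_matching (E mu : {set {set V}}) : Prop :=
  mu \subset E /\ forall v, #|edges_at mu v| <= 1.

Definition mate (mu : {set {set V}}) (v : V) : option {set V} :=
  [pick e in mu | v \in e].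

Definition weakly_blocks(pref : V -> rel (option {set V})) (mu : {set {set V}}) (e : {set V}) : Prop :=
  e \notin mu /\ forall v, v \in e -> pref v (Some e) (mate mu v).

Definition strongly_blocks(pref : V -> rel (option {set V})) (mu : {set {set V}}) (e : {set V}) : Prop :=
  weakly_blocks pref mu e /\ exists2 w, w \in e & strict_pref pref w (Some e) (mate mu w).

Definition nu_stable (E E1 : {set {set V}})(pref : V -> rel (option {set V})) (mu : {set {set V}}) : Prop :=
  [/\ is_matching E mu,
      (forall e, e \in E1 -> ~ weakly_blocks pref mu e)
    & (forall e, e \in E :\: E1 -> ~ strongly_blocks pref mu e)].

Definition meet_at(pref : V -> rel (option {set V})) (mu sigma : {set {set V}}) (v : V) : option {set V} :=
  if pref v (mate mu v) (mate sigma v) then mate mu v else mate sigma v.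

Definition join_at(pref : V -> rel (option {set V})) (mu sigma : {set {set V}}) (v : V) : option {set V} :=
  if pref v (mate sigma v) (mate mu v) then mate mu v else mate sigma v.

Definition nu_meet (V1 : {set V})(pref : V -> rel (option {set V})) (mu sigma : {set {set V}}) : {set {set V}} :=
  [set e : {set V} | [exists v in V1, meet_at pref mu sigma v == Some e]].

Definition nu_join (V1 : {set V})(pref : V -> rel (option {set V})) (mu sigma : {set {set V}}) : {set {set V}} :=
  [set e : {set V} | [exists v in V1, join_at pref mu sigma v == Some e]].

Definition nu_equiv (V1 : {set V})(pref : V -> rel (option {set V})) (mu sigma : {set {set V}}) : Prop :=
  forall v, v \in V1 ->
    pref v (mate mu v) (mate sigma v) /\ pref v (mate sigma v) (mate mu v).

End NUStable.

(* Main.v *)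
Require Import Defs.
From mathcomp Require Import all_boot.
Set Implicit Arguments. Unset Strict Implicit. Unset Printing Implicit Defensive.

Section Alg.
Variables (T : Type) (r : rel T) (D : pred T).
Hypothesis tr : forall x y z, D x -> D y -> D z -> r x y -> r y z -> r x z.
Hypothesis tot : forall x y, D x -> D y -> r x y || r y x.

Definition mx a b := if r a b then a else b.
Definition mn a b := if r b a then a else b.

Lemma refl_r x : D x -> r x x.
Proof. by move=> Dx; have := tot Dx Dx; rewrite orbb. Qed.

Ltac fin :=
  solve [ done |
  match goal with
  | H1 : r ?x ?y = false, H2 : r ?y ?x = false |- _ =>
      by have := tot (x:=x) (y:=y) ltac:(assumption) ltac:(assumption); rewrite H1 H2
  | H1 : r ?x ?y = true, H2 : r ?y ?z = true, H3 : r ?x ?z = false |- _ =>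
      by have := tr (x:=x) (y:=y) (z:=z) ltac:(assumption) ltac:(assumption) ltac:(assumption) H1 H2; rewrite H3
  end ].

Ltac crunch a b c :=
  let raa := fresh in let rbb := fresh in let rcc := fresh in
  let hab := fresh in let hba := fresh in let hac := fresh in
  let hca := fresh in let hbc := fresh in let hcb := fresh in
  have raa := refl_r (x:=a) ltac:(assumption);
  have rbb := refl_r (x:=b) ltac:(assumption);
  have rcc := refl_r (x:=c) ltac:(assumption);
  rewrite /mx /mn;
  case hab: (r a b); case hba: (r b a); case hac: (r a c); case hca: (r c a);
  case hbc: (r b c); case hcb: (r c b);
  repeat progress (rewrite /= ?raa ?rbb ?rcc ?hab ?hba ?hac ?hca ?hbc ?hcb);
  fin.

Variables (a b c : T) (Da : D a) (Db : D b) (Dc : D c).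

Lemma mx_idem : r (mx a a) a && r a (mx a a). Proof using tr tot Da Db Dc. crunch a b c. Qed.
Lemma mn_idem : r (mn a a) a && r a (mn a a). Proof using tr tot Da Db Dc. crunch a b c. Qed.
Lemma mx_comm : r (mx a b) (mx b a) && r (mx b a) (mx a b). Proof using tr tot Da Db Dc. crunch a b c. Qed.
Lemma mn_comm : r (mn a b) (mn b a) && r (mn b a) (mn a b). Proof using tr tot Da Db Dc. crunch a b c. Qed.
Lemma mx_assoc : r (mx a (mx b c)) (mx (mx a b) c) && r (mx (mx a b) c) (mx a (mx b c)).
Proof using tr tot Da Db Dc. crunch a b c. Qed.
Lemma mn_assoc : r (mn a (mn b c)) (mn (mn a b) c) && r (mn (mn a b) c) (mn a (mn b c)).
Proof using tr tot Da Db Dc. crunch a b c. Qed.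
Lemma mx_abs : r (mx a (mn a b)) a && r a (mx a (mn a b)). Proof using tr tot Da Db Dc. crunch a b c. Qed.
Lemma mn_abs : r (mn a (mx a b)) a && r a (mn a (mx a b)). Proof using tr tot Da Db Dc. crunch a b c. Qed.
Lemma mx_distr : r (mx a (mn b c)) (mn (mx a b) (mx a c)) && r (mn (mx a b) (mx a c)) (mx a (mn b c)).
Proof using tr tot Da Db Dc. crunch a b c. Qed.
Lemma mn_distr : r (mn a (mx b c)) (mx (mn a b) (mn a c)) && r (mx (mn a b) (mn a c)) (mn a (mx b c)).
Proof using tr tot Da Db Dc. crunch a b c. Qed.
End Alg.

Section WD.
Variables (T : Type) (r : rel T) (D : pred T).
Hypothesis tr : forall x y z, D x -> D y -> D z -> r x y -> r y z -> r x z.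
Hypothesis tot : forall x y, D x -> D y -> r x y || r y x.

Lemma tot' x y : D x -> D y -> r x y = false -> r y x.
Proof. by move=> Dx Dy h; have := tot Dx Dy; rewrite h. Qed.

Lemma mx_wd a a' b b' : D a -> D a' -> D b -> D b' ->
  r a a' -> r a' a -> r b b' -> r b' b ->
  r (mx r a b) (mx r a' b') && r (mx r a' b') (mx r a b).
Proof.
move=> Da Da' Db Db' h1 h2 h3 h4; rewrite /mx.
case: ifP => h5; case: ifP => h6; apply/andP; split => //.
- exact: (tr Da Db Db').
- exact: (tr Db' Da' Da (tot' Da' Db' h6) h2).
- exact: (tr Db Da Da' (tot' Da Db h5) h1).
- exact: (tr Da' Db' Db h6 h4).
Qed.

Lemma mn_wd a a' b b' : D a -> D a' -> D b -> D b' ->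
  r a a' -> r a' a -> r b b' -> r b' b ->
  r (mn r a b) (mn r a' b') && r (mn r a' b') (mn r a b).
Proof.
move=> Da Da' Db Db' h1 h2 h3 h4; rewrite /mn.
case: ifP => h5; case: ifP => h6; apply/andP; split => //.
- exact: (tr Da Da' Db' h1 (tot' Db' Da' h6)).
- exact: (tr Db' Db Da h4 h5).
- exact: (tr Db Db' Da' h3 h6).
- exact: (tr Da' Da Db h2 (tot' Db Da h5)).
Qed.
End WD.

Section Basics.
Variables (V : finType) (V1 : {set V}) (E E1 : {set {set V}})
  (pref : V -> rel (option {set V})).
Hypothesis inst : valid_instance V1 E E1 pref.

Notation dom v := (pref_dom E v).

Lemma E1E : E1 \subset E. Proof. by case: inst. Qed.

Lemma shape e : e \in E -> exists x y, [/\ x \in V1, y \notin V1 & e = [set x; y]].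
Proof. by case: inst => bip _ _; apply: bip. Qed.

Lemma V1uniq e x y : e \in E -> x \in V1 -> y \in V1 -> x \in e -> y \in e -> x = y.
Proof.
move=> eE xV yV xe ye; move: eE xe ye => /shape [a [b [aV bV ->]]] /set2P [] ? /set2P [] ?;
 subst => //; by move: bV; rewrite ?xV ?yV.
Qed.

Lemma V2uniq e x y : e \in E -> x \notin V1 -> y \notin V1 -> x \in e -> y \in e -> x = y.
Proof.
move=> eE xV yV xe ye; move: eE xe ye => /shape [a [b [aV bV ->]]] /set2P [] ? /set2P [] ?;
 subst => //; by move: xV yV; rewrite aV.
Qed.

Lemma shape1 e v : e \in E -> v \in V1 -> v \in e -> exists w, w \notin V1 /\ e = [set v; w].
Proof.
move=> eE vV ve; have [a [b [aV bV ee]]] := shape eE.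
have av : a = v by apply: (V1uniq eE) => //; rewrite ee set21.
by exists b; rewrite ee av.
Qed.

Lemma shape2 e w : e \in E -> w \notin V1 -> w \in e -> exists v, v \in V1 /\ e = [set v; w].
Proof.
move=> eE wV we; have [a [b [aV bV ee]]] := shape eE.
have bw : b = w by apply: (V2uniq eE) => //; rewrite ee set22.
by exists a; rewrite ee bw.
Qed.

Lemma ex1 e : e \in E -> exists2 x, x \in V1 & x \in e.
Proof. move=> /shape [a [b [aV bV ->]]]; exists a => //; exact: set21. Qed.
Lemma ex2 e : e \in E -> exists2 x, x \in ~: V1 & x \in e.
Proof. move=> /shape [a [b [aV bV ->]]]; exists b; [by rewrite inE | exact: set22]. Qed.

Lemma prefT v x y z : dom v x -> dom v y -> dom v z -> pref v x y -> pref v y z -> pref v x z.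
Proof. by case: inst => _ _ /(_ v) [T _ _]; apply: T. Qed.
Lemma prefC v x y : dom v x -> dom v y -> pref v x y || pref v y x.
Proof. by case: inst => _ _ /(_ v) [_ C _]; apply: C. Qed.
Lemma prefR v x : dom v x -> pref v x x.
Proof. by move=> d; have := prefC d d; rewrite orbb. Qed.
Lemma prefC' v x y : dom v x -> dom v y -> pref v x y = false -> pref v y x.
Proof. by move=> dx dy h; have := prefC dx dy; rewrite h. Qed.
Lemma dom_some v e : e \in E -> v \in e -> dom v (Some e).
Proof. by move=> eE ve; rewrite /= /edges_at inE eE ve. Qed.
Lemma dom_none v : dom v None. Proof. by []. Qed.
Lemma pref_none v x : dom v x -> pref v None x -> x = None.
Proof.
case: x => [e|] // /= he; case: inst => _ _ /(_ v) [_ _ H].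
by have /andP [_ /negP] := H e he.
Qed.

Lemma mateP (A : {set {set V}}) v e : mate A v = Some e -> e \in A /\ v \in e.
Proof. by rewrite /mate; case: pickP => [e' /andP [h1 h2] [<-]|]. Qed.

Lemma mate_None (A : {set {set V}}) v e : mate A v = None -> e \in A -> v \notin e.
Proof.
rewrite /mate; case: pickP => // /(_ e) /= H _ eA; apply/negP => ve.
by rewrite eA ve in H.
Qed.

Lemma match_sub t : is_matching E t -> t \subset E.
Proof. by case. Qed.

Lemma dom_mate (t : {set {set V}}) v : t \subset E -> dom v (mate t v).
Proof.
move=> tE; case h: (mate t v) => [e|] //.
by have [/(subsetP tE) eE ve] := mateP h; apply: dom_some.
Qed.

Lemma mate_match t v e : is_matching E t -> e \in t -> v \in e -> mate t v = Some e.
Proof.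
move=> [tE tm] et ve; rewrite /mate; case: pickP => [e' /andP [h1 h2]|].
  have := tm v => /card_le1_eqP H; congr Some.
  by apply: H; rewrite /edges_at inE ?h1 ?h2 ?et ?ve.
by move=> /(_ e); rewrite et ve.
Qed.

Lemma mate_inj t v e1 e2 : is_matching E t -> mate t v = Some e1 -> mate t v = Some e2 -> e1 = e2.
Proof. by move=> _ -> []. Qed.

Lemma keyL r e x y : nu_stable E E1 pref r -> e \in E -> e \notin r -> e = [set x; y] ->
  pref x (Some e) (mate r x) -> pref y (mate r y) (Some e).
Proof.
move=> [[rE _] nw ns] eE er ee hx.
case: (boolP (pref y (mate r y) (Some e))) => // hy; exfalso.
have dy : dom y (mate r y) := dom_mate y rE.
have ye : y \in e by rewrite ee set22.
have hy' : pref y (Some e) (mate r y) by exact: prefC' dy (dom_some eE ye) (negbTE hy).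
have wb : weakly_blocks pref r e by split => // z; rewrite {1}ee => /set2P [] ->.
case: (boolP (e \in E1)) => [/nw //|eE1].
apply: (ns e); first by rewrite inE eE1 eE.
by split => //; exists y => //; rewrite /strict_pref hy' hy.
Qed.

Lemma keyLs r e x y : nu_stable E E1 pref r -> e \in E -> e \notin r -> e = [set x; y] ->
  strict_pref pref x (Some e) (mate r x) -> strict_pref pref y (mate r y) (Some e).
Proof.
move=> st eE er ee /andP [hx hx'].
rewrite /strict_pref (keyL st eE er ee hx) /=; apply/negP => hy.
move: st => [[rE _] nw ns].
have wb : weakly_blocks pref r e by split => // z; rewrite {1}ee => /set2P [] ->.
case: (boolP (e \in E1)) => [/nw //|eE1].
apply: (ns e); first by rewrite inE eE1 eE.
by split => //; exists x; [rewrite ee set21 | rewrite /strict_pref hx hx'].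
Qed.


Definition Nset (c : V -> option {set V}) := [set e : {set V} | [exists v in V1, c v == Some e]].

Section Choice.
Variables (mu sigma : {set {set V}}) (c : V -> option {set V}).
Hypotheses (muE : mu \subset E) (sigE : sigma \subset E).
Hypothesis hc : forall u, c u = mate mu u \/ c u = mate sigma u.

Lemma c_in u e : c u = Some e -> u \in e /\ (e \in mu \/ e \in sigma).
Proof.
by case: (hc u) => -> /mateP [h1 h2]; split => //; [left|right].
Qed.

Lemma c_E u e : c u = Some e -> e \in E.
Proof. by move=> /c_in [_ [] /subsetP-> //]; apply/subsetP. Qed.

Lemma N_mem e : e \in Nset c -> exists2 u, u \in V1 & c u = Some e.
Proof. by rewrite inE => /existsP [u /andP [uV /eqP h]]; exists u. Qed.

Lemma N_memI u e : u \in V1 -> c u = Some e -> e \in Nset c.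
Proof. by move=> uV h; rewrite inE; apply/existsP; exists u; rewrite uV h eqxx. Qed.

Lemma N_sub : Nset c \subset E.
Proof. by apply/subsetP => e /N_mem [u _ /c_E]. Qed.

Lemma mate_N v : v \in V1 -> mate (Nset c) v = c v.
Proof.
move=> vV; rewrite /mate; case: pickP => [e /andP [eN ve]|H].
  have [u uV cu] := N_mem eN; have [ue _] := c_in cu.
  by have uv := V1uniq (c_E cu) uV vV ue ve; subst u; rewrite cu.
case cv: (c v) => [e|] //.
by have := H e; rewrite (N_memI vV cv) (c_in cv).1.
Qed.

Lemma N_match : (forall w u u' e e', w \notin V1 -> u \in V1 -> u' \in V1 ->
     c u = Some e -> c u' = Some e' -> w \in e -> w \in e' -> e = e') ->
  is_matching E (Nset c).
Proof.
move=> H; split; first exact: N_sub.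
move=> x; apply/card_le1_eqP => e e' /setIdP [eN xe] /setIdP [e'N xe'].
have [u uV cu] := N_mem eN; have [u' uV' cu'] := N_mem e'N.
case: (boolP (x \in V1)) => xV; last by rewrite (H x u u' e e' xV uV uV' cu cu' xe xe').
have [ue _] := c_in cu; have [ue' _] := c_in cu'.
have := V1uniq (c_E cu) uV xV ue xe; have := V1uniq (c_E cu') uV' xV ue' xe'.
by move=> ??; subst; move: cu; rewrite cu' => -[].
Qed.
End Choice.

Lemma stab_of K : is_matching E K ->
  (forall v w, v \in V1 -> w \notin V1 -> exists2 t, nu_stable E E1 pref t &
     [/\ pref v (mate K v) (mate t v), pref w (mate K w) (mate t w) &
        (mate K v = mate t v \/ mate K w = mate t w)]) ->
  nu_stable E E1 pref K.
Proof.
move=> Km H.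
have KE := match_sub Km.
have tr : forall e, e \in E -> e \notin K -> exists2 t, nu_stable E E1 pref t &
    e \notin t /\ forall z, z \in e -> pref z (mate K z) (mate t z).
  move=> e eE eK; have [x [y [xV yV ee]]] := shape eE.
  have [t st [h1 h2 h3]] := H x y xV yV; exists t => //; split.
    apply/negP => et.
    have tm : is_matching E t by case: st.
    have ex : mate t x = Some e by apply: mate_match; rewrite // ee set21.
    have ey : mate t y = Some e by apply: mate_match; rewrite // ee set22.
    by case: h3; rewrite ?ex ?ey => /mateP [eK' _]; rewrite eK' in eK.
  by move=> z; rewrite ee => /set2P [] ->.
split => //.
  move=> e eE1 [eK wb].
  have eE : e \in E := subsetP E1E e eE1.
  have [t [tm nw ns] [et ht]] := tr e eE eK.
  apply: (nw e eE1); split => // z ze.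
  have tE := match_sub tm.
  exact: (prefT (dom_some eE ze) (dom_mate z KE) (dom_mate z tE) (wb z ze) (ht z ze)).
move=> e /setDP [eE eE1] [[eK wb] [z ze /andP [sz sz']]].
have [t [tm nw ns] [et ht]] := tr e eE eK.
have tE := match_sub tm.
have wbt : forall x, x \in e -> pref x (Some e) (mate t x).
  move=> x xe.
  exact: (prefT (dom_some eE xe) (dom_mate x KE) (dom_mate x tE) (wb x xe) (ht x xe)).
apply: (ns e); first by rewrite inE eE1 eE.
split; first by split.
exists z => //; rewrite /strict_pref wbt //=; apply/negP => hz.
move/negP: sz'; apply.
exact: (prefT (dom_mate z KE) (dom_mate z tE) (dom_some eE ze) (ht z ze) hz).
Qed.

Definition Tedges (t : {set {set V}}) (X : {set V}) := [set e in t | [exists x in X, x \in e]].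
Definition Xm (t : {set {set V}}) (X : {set V}) := [set x in X | mate t x != None].

Lemma count_edges (t : {set {set V}}) (X S : {set V}) : is_matching E t -> X \subset S ->
  (forall e x y, e \in E -> x \in S -> y \in S -> x \in e -> y \in e -> x = y) ->
  #|Tedges t X| = #|Xm t X|.
Proof.
move=> tm XS hS.
have -> : Tedges t X = [set odflt set0 (mate t x) | x in Xm t X].
  apply/setP => e; rewrite !inE; apply/idP/imsetP.
    move=> /andP [et /existsP [x /andP [xX xe]]].
    by exists x; [rewrite inE xX (mate_match tm et xe) | rewrite (mate_match tm et xe)].
  move=> [x]; rewrite inE => /andP [xX]; case h: (mate t x) => [e'|] // _ ->.
  have [e't xe'] := mateP h; rewrite /= e't; apply/existsP; exists x; rewrite xX xe'.
  done.
apply: card_in_imset => x y; rewrite !inE => /andP [xX]; case hx: (mate t x) => [ex|] // _.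
move=> /andP [yX]; case hy: (mate t y) => [ey|] // _ /= exy; subst ey.
have [et xe] := mateP hx; have [_ ye] := mateP hy.
apply: (hS ex) => //; [exact: (subsetP (match_sub tm)) | exact: (subsetP XS) | exact: (subsetP XS)].
Qed.

Lemma Tedges_all (t : {set {set V}}) (S : {set V}) : t \subset E -> (forall e, e \in E -> exists2 x, x \in S & x \in e) ->
  Tedges t S = t.
Proof.
move=> tE hS; apply/setP => e; rewrite inE; case et: (e \in t) => //=.
have [x xS xe] := hS e (subsetP tE e et); apply/existsP; exists x; rewrite xS xe.
done.
Qed.

Lemma card_sides (t : {set {set V}}) : is_matching E t -> #|Xm t V1| = #|Xm t (~: V1)|.
Proof.
move=> tm; have tE := match_sub tm.
rewrite -(count_edges tm (subxx V1)); last exact: V1uniq.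
rewrite -(count_edges tm (subxx (~: V1))); last first.
  by move=> e x y eE; rewrite !inE; apply: V2uniq.
by rewrite !Tedges_all //; [exact: ex2 | exact: ex1].
Qed.

Lemma same (t : {set {set V}}) w e e' : is_matching E t -> e \in t -> e' \in t -> w \in e -> w \in e' -> e = e'.
Proof.
by move=> tm et e't we we'; have := mate_match tm et we; rewrite (mate_match tm e't we') => -[].
Qed.

Lemma stable_match t : nu_stable E E1 pref t -> is_matching E t. Proof. by case. Qed.

Lemma edge_vw e v w : e \in E -> v \in V1 -> w \notin V1 -> v \in e -> w \in e -> e = [set v; w].
Proof.
move=> eE vV wV ve we; have [w' [w'V ee]] := shape1 eE vV ve.
have w'e : w' \in e by rewrite ee set22.
by have := V2uniq eE w'V wV w'e we => <-.
Qed.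

Lemma cover r1 r2 u e w : nu_stable E E1 pref r1 -> nu_stable E E1 pref r2 ->
  u \in V1 -> w \notin V1 -> mate r1 u = Some e -> pref u (mate r1 u) (mate r2 u) -> w \in e ->
  mate r2 w != None.
Proof.
move=> s1 s2 uV wV h hp we; have [er1 ue] := mateP h.
have r1E := match_sub (stable_match s1); have r2E := match_sub (stable_match s2).
have eE := subsetP r1E e er1.
case: (boolP (e \in r2)) => er2.
  by rewrite (mate_match (stable_match s2) er2 we).
have hp' : pref u (Some e) (mate r2 u) by rewrite -h.
have k := keyL s2 eE er2 (edge_vw eE uV wV ue we) hp'.
case hw: (mate r2 w) k => [f|] //.
by move/(pref_none (dom_some eE we)).
Qed.

Lemma mixed r1 r2 v u e1 e2 w : nu_stable E E1 pref r1 -> nu_stable E E1 pref r2 ->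
  v \in V1 -> u \in V1 -> w \notin V1 ->
  mate r1 v = Some e1 -> pref v (mate r1 v) (mate r2 v) ->
  mate r2 u = Some e2 -> strict_pref pref u (mate r2 u) (mate r1 u) ->
  w \in e1 -> w \in e2 -> e1 = e2.
Proof.
move=> s1 s2 vV uV wV h1 p1 h2 p2 we1 we2.
have m1 := stable_match s1; have m2 := stable_match s2.
have [e1r1 ve1] := mateP h1; have [e2r2 ue2] := mateP h2.
have e1E := subsetP (match_sub m1) e1 e1r1; have e2E := subsetP (match_sub m2) e2 e2r2.
case: (boolP (e1 \in r2)) => e1r2; first exact: (same m2 e1r2 e2r2 we1 we2).
have p1' : pref v (Some e1) (mate r2 v) by rewrite -h1.
have k1 := keyL s2 e1E e1r2 (edge_vw e1E vV wV ve1 we1) p1'.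
rewrite (mate_match m2 e2r2 we2) in k1.
case: (boolP (e2 \in r1)) => e2r1; first exact: (same m1 e1r1 e2r1 we1 we2).
have p2' : strict_pref pref u (Some e2) (mate r1 u) by rewrite -h2.
have k2 := keyLs s1 e2E e2r1 (edge_vw e2E uV wV ue2 we2) p2'.
rewrite (mate_match m1 e1r1 we1) in k2.
by move: k2; rewrite /strict_pref k1 andbF.
Qed.

Section Meet.
Variables mu sigma : {set {set V}}.
Hypotheses (smu : nu_stable E E1 pref mu) (ssig : nu_stable E E1 pref sigma).
Let mum := stable_match smu.
Let sigm := stable_match ssig.
Let muE := match_sub mum.
Let sigE := match_sub sigm.
Let c := meet_at pref mu sigma.
Let M := Nset c.

Lemma hcm u : c u = mate mu u \/ c u = mate sigma u.
Proof. by rewrite /c /meet_at; case: ifP; auto. Qed.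

Lemma meet_cases u : (c u = mate mu u /\ pref u (mate mu u) (mate sigma u)) \/
   (c u = mate sigma u /\ strict_pref pref u (mate sigma u) (mate mu u)).
Proof.
rewrite /c /meet_at; case: ifP => h; [by left | right]; split => //.
by rewrite /strict_pref h (prefC' (dom_mate u muE) (dom_mate u sigE) h).
Qed.

Lemma meet_ge u : pref u (c u) (mate mu u) && pref u (c u) (mate sigma u).
Proof.
have dm := dom_mate u muE; have ds := dom_mate u sigE.
case: (meet_cases u) => [[-> h]|[-> /andP [h _]]]; by rewrite ?h ?prefR.
Qed.

Lemma meet_match : is_matching E M.
Proof.
apply: (N_match muE sigE hcm) => w u u' e e' wV uV uV' cu cu' we we'.
case: (meet_cases u) => [[h p]|[h p]]; case: (meet_cases u') => [[h' p']|[h' p']];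
  rewrite h in cu; rewrite h' in cu'.
- by have [? _] := mateP cu; have [? _] := mateP cu'; apply: (same mum) we we'.
- exact: (mixed smu ssig uV uV' wV cu p cu' p' we we').
- exact: esym (mixed smu ssig uV' uV wV cu' p' cu p we' we).
- by have [? _] := mateP cu; have [? _] := mateP cu'; apply: (same sigm) we we'.
Qed.

Lemma mateM v : v \in V1 -> mate M v = c v.
Proof. exact: (mate_N muE sigE hcm). Qed.

Lemma XmM2 (t : {set {set V}}) : (t = mu \/ t = sigma) -> Xm M (~: V1) \subset Xm t (~: V1).
Proof.
move=> ht; apply/subsetP => w; rewrite !inE => /andP [wV]; rewrite wV /=.
case h: (mate M w) => [e|] // _; have [eM we] := mateP h.
have [u uV cu] := N_mem eM.
case: (meet_cases u) => [[hu p]|[hu /andP [p _]]]; rewrite hu in cu.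
- case: ht => ->; first by have [? _] := mateP cu; rewrite (mate_match mum _ we).
  exact: (cover smu ssig uV wV cu p we).
- case: ht => ->; last by have [? _] := mateP cu; rewrite (mate_match sigm _ we).
  exact: (cover ssig smu uV wV cu p we).
Qed.

Lemma XmM1 (t : {set {set V}}) : (t = mu \/ t = sigma) -> Xm t V1 \subset Xm M V1.
Proof.
move=> ht; apply/subsetP => v; rewrite !inE => /andP [vV]; rewrite vV /= mateM //.
have dm := dom_mate v muE; have ds := dom_mate v sigE.
case: (meet_cases v) => [[-> p]|[-> /andP [p _]]]; case: ht => -> //; apply: contra => /eqP h;
  by move: p; rewrite h => /(pref_none _) ->.
Qed.

Lemma RH_t (t : {set {set V}}) : (t = mu \/ t = sigma) ->
  Xm M (~: V1) = Xm t (~: V1) /\ Xm t V1 = Xm M V1.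
Proof.
move=> ht; have tm : is_matching E t by case: ht => ->.
have s2 := XmM2 ht; have s1 := XmM1 ht.
have c1 := card_sides tm; have c2 := card_sides meet_match.
have l1 := subset_leq_card s1; have l2 := subset_leq_card s2.
split; apply/eqP; rewrite eqEcard ?s1 ?s2 /=.
  by rewrite -c1 (leq_trans l1) // c2.
by rewrite c2 (leq_trans l2) // -c1.
Qed.

Lemma RH1 : Xm mu V1 = Xm sigma V1.
Proof. by rewrite (RH_t (or_introl erefl)).2 (RH_t (or_intror erefl)).2. Qed.
Lemma RH2 : Xm mu (~: V1) = Xm sigma (~: V1).
Proof. by rewrite -(RH_t (or_introl erefl)).1 (RH_t (or_intror erefl)).1. Qed.

Lemma meet_w w : w \notin V1 -> mate M w = mate mu w \/ mate M w = mate sigma w.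
Proof.
move=> wV; case h: (mate M w) => [e|].
  have [eM we] := mateP h; have [u uV cu] := N_mem eM.
  have [_ [emu|esig]] := c_in hcm cu.
    by left; rewrite (mate_match mum emu we).
  by right; rewrite (mate_match sigm esig we).
left; have : w \notin Xm M (~: V1) by rewrite inE h eqxx andbF.
rewrite (RH_t (or_introl erefl)).1 inE inE wV /=.
by case: (mate mu w).
Qed.

Lemma meet_stable : nu_stable E E1 pref M.
Proof.
apply: stab_of; first exact: meet_match.
move=> v w vV wV; rewrite (mateM vV).
have /andP [g1 g2] := meet_ge v.
case: (meet_w wV) => h; [exists mu | exists sigma] => //; split => //;
  by [rewrite h; apply: prefR; apply: dom_mate | right].
Qed.

End Meet.

Section Join.
Variables mu sigma : {set {set V}}.
Hypotheses (smu : nu_stable E E1 pref mu) (ssig : nu_stable E E1 pref sigma).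
Let mum := stable_match smu.
Let sigm := stable_match ssig.
Let muE := match_sub mum.
Let sigE := match_sub sigm.
Let c := join_at pref mu sigma.
Let J := Nset c.

Lemma hcj u : c u = mate mu u \/ c u = mate sigma u.
Proof. by rewrite /c /join_at; case: ifP; auto. Qed.

Lemma join_cases u : (c u = mate mu u /\ pref u (mate sigma u) (mate mu u)) \/
   (c u = mate sigma u /\ strict_pref pref u (mate mu u) (mate sigma u)).
Proof.
rewrite /c /join_at; case: ifP => h; [by left | right]; split => //.
by rewrite /strict_pref h (prefC' (dom_mate u sigE) (dom_mate u muE) h).
Qed.

Let T1 := [set v in V1 | (mate mu v != mate sigma v) && pref v (mate sigma v) (mate mu v)].
Let T2 := [set w in ~: V1 | (mate mu w != mate sigma w) && pref w (mate mu w) (mate sigma w)].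

Lemma claimA v : v \in T1 -> exists f, mate sigma v = Some f /\ exists2 w, w \in T2 & w \in f.
Proof.
rewrite inE => /and3P [vV neq p].
case hs: (mate sigma v) neq p => [f|] neq p; last first.
  by move: p => /(pref_none (dom_mate v muE)) h; rewrite h in neq.
exists f; split => //; have [fs vf] := mateP hs.
have fE := subsetP sigE f fs.
have [w [wV fe]] := shape1 fE vV vf.
have wf : w \in f by rewrite fe set22.
exists w => //.
have fmu : f \notin mu.
  by apply/negP => fm; move: neq; rewrite (mate_match mum fm vf) eqxx.
have k := keyL smu fE fmu fe p.
rewrite inE inE wV /= (mate_match sigm fs wf) k andbT.
by apply/eqP => h; have [] := mateP h; rewrite (negbTE fmu).
Qed.

Lemma claimB w : w \in T2 -> exists e, mate mu w = Some e /\ exists2 u, u \in T1 & u \in e.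
Proof.
rewrite inE inE => /and3P [wV neq p].
case hm: (mate mu w) neq p => [e|] neq p; last first.
  by move: p => /(pref_none (dom_mate w sigE)) h; rewrite h in neq.
exists e; split => //; have [em we] := mateP hm.
have eE := subsetP muE e em.
have [u [uV ee]] := shape2 eE wV we.
have ue : u \in e by rewrite ee set21.
exists u => //.
have esig : e \notin sigma.
  by apply/negP => es; move: neq; rewrite (mate_match sigm es we) eqxx.
have ee' : e = [set w; u] by rewrite ee setUC.
have k := keyL ssig eE esig ee' p.
rewrite inE uV /= (mate_match mum em ue) k andbT.
by apply/eqP => h; have [] := mateP (esym h); rewrite (negbTE esig).
Qed.

Lemma T1V : T1 \subset V1. Proof. by apply/subsetP => v; rewrite inE => /andP []. Qed.
Lemma T2V : T2 \subset ~: V1. Proof. by apply/subsetP => v; rewrite inE => /andP []. Qed.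

Lemma V2uniq' e x y : e \in E -> x \in ~: V1 -> y \in ~: V1 -> x \in e -> y \in e -> x = y.
Proof. by rewrite !inE; apply: V2uniq. Qed.

Lemma T_counts : Xm sigma T2 = T2 /\ Tedges sigma T1 = Tedges sigma T2 /\
                 Xm mu T1 = T1 /\ Tedges mu T2 = Tedges mu T1.
Proof.
have XmuT2 : Xm mu T2 = T2.
  apply/setP => w; rewrite inE; case wT: (w \in T2) => //=.
  by have [e [-> _]] := claimB wT.
have XsigT1 : Xm sigma T1 = T1.
  apply/setP => v; rewrite inE; case vT: (v \in T1) => //=.
  by have [f [-> _]] := claimA vT.
have sub_mu : Tedges mu T2 \subset Tedges mu T1.
  apply/subsetP => e; rewrite !inE => /andP [em /existsP [w /andP [wT we]]].
  rewrite em /=; have [e' [h [u uT ue']]] := claimB wT.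
  have := mate_match mum em we; rewrite h => -[ee]; subst e'.
  by apply/existsP; exists u; rewrite uT ue'.
have sub_sig : Tedges sigma T1 \subset Tedges sigma T2.
  apply/subsetP => f; rewrite !inE => /andP [fs /existsP [v /andP [vT vf]]].
  rewrite fs /=; have [f' [h [w wT wf']]] := claimA vT.
  have := mate_match sigm fs vf; rewrite h => -[ee]; subst f'.
  by apply/existsP; exists w; rewrite wT wf'.
have cm2 := count_edges mum T2V V2uniq'.
have cm1 := count_edges mum T1V V1uniq.
have cs2 := count_edges sigm T2V V2uniq'.
have cs1 := count_edges sigm T1V V1uniq.
have l1 := subset_leq_card sub_mu; have l2 := subset_leq_card sub_sig.
have l3 : #|Xm mu T1| <= #|T1| by apply: subset_leq_card; apply/subsetP => x; rewrite inE => /andP [].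
have l4 : #|Xm sigma T2| <= #|T2| by apply: subset_leq_card; apply/subsetP => x; rewrite inE => /andP [].
rewrite XmuT2 in cm2; rewrite XsigT1 in cs1.
have s3 : Xm mu T1 \subset T1 by apply/subsetP => x; rewrite inE => /andP [].
have s4 : Xm sigma T2 \subset T2 by apply/subsetP => x; rewrite inE => /andP [].
split; [|split; [|split]]; apply/eqP; rewrite eqEcard ?s3 ?s4 ?sub_mu ?sub_sig /=.
- rewrite -cm2 -cs2; apply: (leq_trans l1); rewrite cm1; apply: (leq_trans l3); rewrite -cs1; exact: l2.
- rewrite cs2 cs1; apply: (leq_trans l4); rewrite -cm2; apply: (leq_trans l1); rewrite cm1; exact: l3.
- rewrite -cs1 -cm1; apply: (leq_trans l2); rewrite cs2; apply: (leq_trans l4); rewrite -cm2; exact: l1.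
- rewrite cm1 cm2; apply: (leq_trans l3); rewrite -cs1; apply: (leq_trans l2); rewrite cs2; exact: l4.
Qed.

Lemma surjA w : w \in T2 -> exists f, mate sigma w = Some f /\ exists2 x, x \in T1 & x \in f.
Proof.
move=> wT; have [h1 [h2 _]] := T_counts.
have : w \in Xm sigma T2 by rewrite h1.
rewrite inE wT /=; case hs: (mate sigma w) => [f|] // _.
exists f; split => //; have [fs wf] := mateP hs.
have : f \in Tedges sigma T2 by rewrite inE fs; apply/existsP; exists w; rewrite wT wf.
by rewrite -h2 inE fs => /existsP [x /andP [xT xf]]; exists x.
Qed.

Lemma surjB u : u \in T1 -> exists e, mate mu u = Some e /\ exists2 w, w \in T2 & w \in e.
Proof.
move=> uT; have [_ [_ [h1 h2]]] := T_counts.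
have : u \in Xm mu T1 by rewrite h1.
rewrite inE uT /=; case hs: (mate mu u) => [e|] // _.
exists e; split => //; have [em ue] := mateP hs.
have : e \in Tedges mu T1 by rewrite inE em; apply/existsP; exists u; rewrite uT ue.
by rewrite -h2 inE em => /existsP [x /andP [xT xe]]; exists x.
Qed.

Lemma inT2 v e w : v \in V1 -> w \notin V1 -> mate mu v = Some e -> e \notin sigma ->
  pref v (mate sigma v) (mate mu v) -> w \in e -> w \in T2.
Proof.
move=> vV wV h es p we.
have vT : v \in T1.
  rewrite inE vV p andbT h; apply/eqP => h'.
  by have [] := mateP (esym h'); rewrite (negbTE es).
have [e' [h' [w' w'T w'e]]] := surjB vT; rewrite h in h'; case: h' => ?; subst e'.
have [em _] := mateP h.
have -> // : w = w'.
apply: (V2uniq (subsetP muE e em)) => //; by move: (subsetP T2V w' w'T); rewrite inE.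
Qed.

Lemma notT2 u e w : u \in V1 -> mate sigma u = Some e -> e \notin mu ->
  strict_pref pref u (mate mu u) (mate sigma u) -> w \in e -> w \notin T2.
Proof.
move=> uV h em /andP [_ p] we; apply/negP => wT.
have [f [hf [x xT xf]]] := surjA wT.
have [es _] := mateP h.
rewrite (mate_match sigm es we) in hf; case: hf => ?; subst f.
have [_ ue] := mateP h.
have ? : x = u by apply: (V1uniq (subsetP sigE e es)) => //; exact: (subsetP T1V).
subst x; move: xT; rewrite inE => /and3P [_ _]; by rewrite (negbTE p).
Qed.

Lemma join_match : is_matching E J.
Proof.
apply: (N_match muE sigE hcj) => w u u' e e' wV uV uV' cu cu' we we'.
have jm : forall v1 v2 e1 e2, v1 \in V1 -> v2 \in V1 ->
    mate mu v1 = Some e1 -> pref v1 (mate sigma v1) (mate mu v1) ->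
    mate sigma v2 = Some e2 -> strict_pref pref v2 (mate mu v2) (mate sigma v2) ->
    w \in e1 -> w \in e2 -> e1 = e2.
  move=> v1 v2 e1 e2 v1V v2V h1 p1 h2 p2 we1 we2.
  have [e1m _] := mateP h1; have [e2s _] := mateP h2.
  case: (boolP (e1 \in sigma)) => e1s; first exact: (same sigm e1s e2s we1 we2).
  case: (boolP (e2 \in mu)) => e2m; first exact: (same mum e1m e2m we1 we2).
  have := inT2 v1V wV h1 e1s p1 we1; by rewrite (negbTE (notT2 v2V h2 e2m p2 we2)).
case: (join_cases u) => [[h p]|[h p]]; case: (join_cases u') => [[h' p']|[h' p']];
  rewrite h in cu; rewrite h' in cu'.
- by have [? _] := mateP cu; have [? _] := mateP cu'; apply: (same mum) we we'.
- exact: (jm u u' e e' uV uV' cu p cu' p' we we').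
- exact: esym (jm u' u e' e uV' uV cu' p' cu p we' we).
- by have [? _] := mateP cu; have [? _] := mateP cu'; apply: (same sigm) we we'.
Qed.

Lemma mateJ v : v \in V1 -> mate J v = c v.
Proof. exact: (mate_N muE sigE hcj). Qed.

Lemma XmJ2 : Xm J (~: V1) = Xm mu (~: V1).
Proof.
have R1 := RH1 smu ssig; have R2 := RH2 smu ssig.
have s2 : Xm J (~: V1) \subset Xm mu (~: V1).
  apply/subsetP => w; rewrite !inE => /andP [wV]; rewrite wV /=.
  case h: (mate J w) => [e|] // _; have [eJ we] := mateP h.
  have [u uV cu] := N_mem eJ; have [_ [em|es]] := c_in hcj cu.
    by rewrite (mate_match mum em we).
  have : w \in Xm sigma (~: V1) by rewrite inE inE wV (mate_match sigm es we).
  by rewrite -R2 inE => /andP [].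
have e1 : Xm J V1 = Xm mu V1.
  apply/setP => v; rewrite !inE; case vV: (v \in V1) => //=; rewrite mateJ //.
  have : (mate mu v != None) = (mate sigma v != None).
    by move/setP: R1 => /(_ v); rewrite !inE vV.
  by case: (hcj v) => -> ->.
apply/eqP; rewrite eqEcard s2 /=.
by rewrite -(card_sides join_match) -(card_sides mum) e1.
Qed.

Lemma join_ge w : w \notin V1 ->
  pref w (mate J w) (mate mu w) && pref w (mate J w) (mate sigma w).
Proof.
move=> wV; have dm := dom_mate w muE; have ds := dom_mate w sigE.
case h: (mate J w) => [e|]; last first.
  have : w \notin Xm J (~: V1) by rewrite inE h eqxx andbF.
  rewrite XmJ2 inE inE wV /= negbK => /eqP hm.
  have : w \notin Xm sigma (~: V1) by rewrite -(RH2 smu ssig) !inE wV hm eqxx.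
  rewrite !inE wV /= negbK => /eqP ->; rewrite hm.
  by rewrite prefR.
have [eJ we] := mateP h; have [u uV cu] := N_mem eJ.
have de : pref_dom E w (Some e) by apply: dom_some => //; exact: (subsetP (N_sub muE sigE hcj)).
case: (join_cases u) => [[hu p]|[hu p]]; rewrite hu in cu.
  have [em _] := mateP cu; rewrite (mate_match mum em we) (prefR de) /=.
  case: (boolP (e \in sigma)) => es; first by rewrite (mate_match sigm es we) (prefR de).
  have := inT2 uV wV cu es p we; rewrite !inE wV /= (mate_match mum em we) => /andP [_ ->].
  done.
have [es _] := mateP cu; rewrite (mate_match sigm es we) (prefR de) andbT.
case: (boolP (e \in mu)) => em; first by rewrite (mate_match mum em we) (prefR de).
have nT := notT2 uV cu em p we.
case: (boolP (pref w (Some e) (mate mu w))) => // np.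
move: nT; rewrite !inE wV /= (mate_match sigm es we).
rewrite (prefC' de dm (negbTE np)) andbT negbK => /eqP hm.
by move: np; rewrite hm (prefR de).
Qed.

Lemma join_stable : nu_stable E E1 pref J.
Proof.
apply: stab_of; first exact: join_match.
move=> v w vV wV; rewrite (mateJ vV).
have /andP [g1 g2] := join_ge wV.
case: (join_cases v) => [[h _]|[h _]]; [exists mu | exists sigma] => //; split => //;
  by [rewrite h; apply: prefR; apply: dom_mate | left].
Qed.

End Join.

Lemma hc_meet (A B : {set {set V}}) u : meet_at pref A B u = mate A u \/ meet_at pref A B u = mate B u.
Proof. by rewrite /meet_at; case: ifP; auto. Qed.
Lemma hc_join (A B : {set {set V}}) u : join_at pref A B u = mate A u \/ join_at pref A B u = mate B u.
Proof. by rewrite /join_at; case: ifP; auto. Qed.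

Lemma main :
  let S := nu_stable E E1 pref in
  let eqv := nu_equiv V1 pref in
  let mt := nu_meet V1 pref in
  let jn := nu_join V1 pref in
  (forall mu sigma, S mu -> S sigma -> S (mt mu sigma) /\ S (jn mu sigma)) /\
  (forall mu mu' sigma sigma', S mu -> S mu' -> S sigma -> S sigma' ->
     eqv mu mu' -> eqv sigma sigma' ->
     eqv (mt mu sigma) (mt mu' sigma') /\ eqv (jn mu sigma) (jn mu' sigma')) /\
  (forall mu, S mu -> eqv (mt mu mu) mu /\ eqv (jn mu mu) mu) /\
  (forall mu sigma, S mu -> S sigma ->
     eqv (mt mu sigma) (mt sigma mu) /\ eqv (jn mu sigma) (jn sigma mu)) /\
  (forall mu sigma tau, S mu -> S sigma -> S tau ->
     eqv (mt mu (mt sigma tau)) (mt (mt mu sigma) tau) /\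
     eqv (jn mu (jn sigma tau)) (jn (jn mu sigma) tau)) /\
  (forall mu sigma, S mu -> S sigma ->
     eqv (mt mu (jn mu sigma)) mu /\ eqv (jn mu (mt mu sigma)) mu) /\
  (forall mu sigma tau, S mu -> S sigma -> S tau ->
     eqv (mt mu (jn sigma tau)) (jn (mt mu sigma) (mt mu tau)) /\
     eqv (jn mu (mt sigma tau)) (mt (jn mu sigma) (jn mu tau))).
Proof.
move=> S eqv mt jn.
have sE : forall t, S t -> t \subset E by move=> t /stable_match/match_sub.
have mtE : forall A B : {set {set V}}, A \subset E -> B \subset E -> mt A B \subset E.
  by move=> A B AE BE; apply: (N_sub AE BE (hc_meet A B)).
have jnE : forall A B : {set {set V}}, A \subset E -> B \subset E -> jn A B \subset E.
  by move=> A B AE BE; apply: (N_sub AE BE (hc_join A B)).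
have mtm : forall (A B : {set {set V}}) v, A \subset E -> B \subset E -> v \in V1 ->
    mate (mt A B) v = mx (pref v) (mate A v) (mate B v).
  by move=> A B v AE BE vV; apply: (mate_N AE BE (hc_meet A B)).
have jnm : forall (A B : {set {set V}}) v, A \subset E -> B \subset E -> v \in V1 ->
    mate (jn A B) v = mn (pref v) (mate A v) (mate B v).
  by move=> A B v AE BE vV; apply: (mate_N AE BE (hc_join A B)).
have tr := fun v => @prefT v.
have tot := fun v => @prefC v.
split.
  by move=> mu sigma smu ssig; split; [exact: meet_stable | exact: join_stable].
split.
  move=> mu mu' sigma sigma' smu smu' ssig ssig' e1 e2.
  have F1 := sE _ smu; have F2 := sE _ smu'; have F3 := sE _ ssig; have F4 := sE _ ssig'.
  split => v vV; have [h1 h2] := e1 v vV; have [h3 h4] := e2 v vV.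
    rewrite !mtm //; apply/andP; apply: (mx_wd (tr v) (tot v)) => //; exact: dom_mate.
  rewrite !jnm //; apply/andP; apply: (mn_wd (tr v) (tot v)) => //; exact: dom_mate.
split.
  move=> mu smu; have F1 := sE _ smu.
  split => v vV.
    rewrite !mtm //; apply/andP; apply: (mx_idem (tr v) (tot v) (b:=mate mu v) (c:=mate mu v)); exact: dom_mate.
  rewrite !jnm //; apply/andP; apply: (mn_idem (tr v) (tot v) (b:=mate mu v) (c:=mate mu v)); exact: dom_mate.
split.
  move=> mu sigma smu ssig; have F1 := sE _ smu; have F2 := sE _ ssig.
  split => v vV.
    rewrite !mtm //; apply/andP; apply: (mx_comm (tr v) (tot v) (c:=mate mu v)); exact: dom_mate.
  rewrite !jnm //; apply/andP; apply: (mn_comm (tr v) (tot v) (c:=mate mu v)); exact: dom_mate.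
split.
  move=> mu sigma tau smu ssig stau; have F1 := sE _ smu; have F2 := sE _ ssig; have F3 := sE _ stau.
  split => v vV.
    rewrite !mtm ?mtE //; apply/andP; apply: (mx_assoc (tr v) (tot v)); exact: dom_mate.
  rewrite !jnm ?jnE //; apply/andP; apply: (mn_assoc (tr v) (tot v)); exact: dom_mate.
split.
  move=> mu sigma smu ssig; have F1 := sE _ smu; have F2 := sE _ ssig.
  split => v vV.
    rewrite mtm ?jnE // jnm //; apply/andP; apply: (mx_abs (tr v) (tot v) (c:=mate mu v)); exact: dom_mate.
  rewrite jnm ?mtE // mtm //; apply/andP; apply: (mn_abs (tr v) (tot v) (c:=mate mu v)); exact: dom_mate.
move=> mu sigma tau smu ssig stau; have F1 := sE _ smu; have F2 := sE _ ssig; have F3 := sE _ stau.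
split => v vV.
  rewrite !(mtm, jnm); try by rewrite ?(mtE, jnE).
  apply/andP.
  apply: (mx_distr (tr v) (tot v)); exact: dom_mate.
rewrite !(mtm, jnm); try by rewrite ?(mtE, jnE).
apply/andP.
apply: (mn_distr (tr v) (tot v)); exact: dom_mate.
Qed.

End Basics.

Theorem theorem5p5 (V : finType) (V1 : {set V}) (E E1 : {set {set V}})
  (pref : V -> rel (option {set V})) :
  valid_instance V1 E E1 pref ->
  let S := nu_stable E E1 pref in
  let eqv := nu_equiv V1 pref in
  let mt := nu_meet V1 pref in
  let jn := nu_join V1 pref in
  (* the operations land in S *)
  (forall mu sigma, S mu -> S sigma -> S (mt mu sigma) /\ S (jn mu sigma)) /\
  (* well-definedness on equivalence classes *)
  (forall mu mu' sigma sigma', S mu -> S mu' -> S sigma -> S sigma' ->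
     eqv mu mu' -> eqv sigma sigma' ->
     eqv (mt mu sigma) (mt mu' sigma') /\ eqv (jn mu sigma) (jn mu' sigma')) /\
  (* idempotence *)
  (forall mu, S mu -> eqv (mt mu mu) mu /\ eqv (jn mu mu) mu) /\
  (* commutativity *)
  (forall mu sigma, S mu -> S sigma ->
     eqv (mt mu sigma) (mt sigma mu) /\ eqv (jn mu sigma) (jn sigma mu)) /\
  (* associativity *)
  (forall mu sigma tau, S mu -> S sigma -> S tau ->
     eqv (mt mu (mt sigma tau)) (mt (mt mu sigma) tau) /\
     eqv (jn mu (jn sigma tau)) (jn (jn mu sigma) tau)) /\
  (* absorption *)
  (forall mu sigma, S mu -> S sigma ->
     eqv (mt mu (jn mu sigma)) mu /\ eqv (jn mu (mt mu sigma)) mu) /\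
  (* distributivity *)
  (forall mu sigma tau, S mu -> S sigma -> S tau ->
     eqv (mt mu (jn sigma tau)) (jn (mt mu sigma) (mt mu tau)) /\
     eqv (jn mu (mt sigma tau)) (mt (jn mu sigma) (jn mu tau))).
Proof. move=> inst; exact: (main inst). Qed.
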